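(* Let $\mathcal P$ be a conventional logic program. Then: (1) if $v$ is a three-valued stable model of $\mathcal P$, then $v$ is a pessimistic fixed model of $\mathcal P$, i.e. $\Psi'^{\mathcal F}_{\mathcal P}(v)=v$; (2) if $v$ is the well-founded semantics of $\mathcal P$, then $v=Fix^{\mathcal F}_{\mathcal U}$; (3) if $v$ is the Kripke-Kleene semantics of $\mathcal P$, then $v=Fix^{\mathcal U}_{\mathcal U}$.
   Context: $\mathcal{FOUR}=\{\mathcal F,\mathcal T,\mathcal U,\mathcal I\}$ is Belnap's bilattice: truth order $\mathcal F\le_t\mathcal U\le_t\mathcal T$, $\mathcal F\le_t\mathcal I\le_t\mathcal T$; knowledge order $\mathcal U\le_k\mathcal F\le_k\mathcal I$, $\mathcal U\le_k\mathcal T\le_k\mathcal I$; $\wedge,\vee$ are meet/join for $\le_t$, $\otimes,\oplus$ for $\le_k$ (with infinitary versions $\bigwedge,\bigvee,\bigotimes,\bigoplus$); negation $\neg\mathcal T=\mathcal F$, $\neg\mathcal F=\mathcal T$, $\neg\mathcal U=\mathcal U$, $\neg\mathcal I=\mathcal I$. A Fitting program over $\mathcal{FOUR}$: formulas are built from literals ($A$ or $\neg A$) and elements of $\mathcal{FOUR}$ using $\wedge,\vee,\otimes,\oplus,\exists,\forall$ (with built-in predicate $equal$); a clause is $P(x_1,\dots,x_n)\leftarrow\phi(x_1,\dots,x_n)$ with the body's free variables among $x_1,\dots,x_n$; a program is a finite set of clauses with no predicate letter heading more than one clause; Inst-$\mathcal P$ is its set of ground instances. A conventional logic program is such a program that does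 not involve $\otimes,\oplus,\forall,\mathcal U,\mathcal I$. Valuations are maps from ground atoms to $\mathcal{FOUR}$, ordered pointwise; they extend to closed formulas compositionally ($v(\beta)=\beta$, $v(\neg A)=\neg v(A)$, connectives pointwise, $\exists$ as $\bigvee$, $\forall$ as $\bigwedge$ over closed-term instances, $v(equal(s,t))=\mathcal T$ if $s=t$ else $\mathcal F$). The contrajoin $v\bigtriangleup w$ evaluates likewise but gives $A$ the value $v(A)$ and $\neg A$ the value $\neg w(A)$. For $\alpha\in\mathcal{FOUR}$: $\Psi_{\mathcal P}^{\alpha}(v,w)(A)=\alpha$ if $A$ heads no member of Inst-$\mathcal P$, and $=(v\bigtriangleup w)(B)$ if $A\leftarrow B\in$ Inst-$\mathcal P$. $\Psi'^{\mathcal F}_{\mathcal P}(v)$ is the $\le_t$-least fixpoint of $x\mapsto\Psi^{\mathcal F}_{\mathcal P}(x,v)$ and $\Psi'^{\mathcal U}_{\mathcal P}(v)$ is the $\le_k$-least fixpoint of $x\mapsto\Psi^{\mathcal U}_{\mathcal P}(x,v)$. A pessimistic fixed model is a fixpoint of $\Psi'^{\mathcal F}_{\mathcal P}$. $Fix^{\alpha}_{\mathcal U}$ is the $\le_k$-least fixpoint of $\Psi'^{\alpha}_{\mathcal P}$. Three-valued stable models (Przymusinski): for a valuation $v$ with values in $\{\mathcal F,\mathcal U,\mathcal T\}$, let $\mathcal P_{/v}$ be obtained from Inst-$\mathcal P$ by replacing each negative literal $\neg A$ in bodies by the value $\neg v(A)$; let $\Phi_{\mathcal P_{/v}}(u)(A)=\mathcal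 F$ if $A$ heads no rule of $\mathcal P_{/v}$, $\mathcal T$ if $A\leftarrow$ (empty body) is in $\mathcal P_{/v}$, and otherwise the join over rules $A\leftarrow B$ of $\mathcal P_{/v}$ of $u(B)$; $GL_{\mathcal P}(v)$ is the $\le_t$-least fixpoint of $\Phi_{\mathcal P_{/v}}$. $v$ is a three-valued stable model if $GL_{\mathcal P}(v)=v$; the well-founded semantics is the least three-valued stable model. Kripke-Kleene semantics (as defined in the paper): $\Phi_{\mathcal P}(v)(A)=\mathcal T$ if some rule of Inst-$\mathcal P$ with head $A$ has body value $\mathcal T$ under $v$; $=\mathcal F$ if there is a rule with head $A$ and every rule with head $A$ has body value $\mathcal F$ under $v$; $=\mathcal U$ otherwise. The Kripke-Kleene semantics is the $\le_k$-least fixpoint of $\Phi_{\mathcal P}$. *)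

(* Defs.v *)
From Stdlib Require Import List Arith Bool ClassicalEpsilon.
Import ListNotations.

Set Implicit Arguments.

(** * Belnap's bilattice FOUR *)

Inductive FOUR : Type := FF | TT | UU | II.

Definition le_t (x y : FOUR) : bool :=
  match x, y with
  | FF, _ => true
  | _, TT => true
  | UU, UU => true
  | II, II => true
  | _, _ => false
  end.

Definition le_k (x y : FOUR) : bool :=
  match x, y with
  | UU, _ => true
  | _, II => true
  | FF, FF => true
  | TT, TT => true
  | _, _ => false
  end.

Definition negF (x : FOUR) : FOUR :=
  match x with TT => FF | FF => TT | UU => UU | II => II end.

(** "evidence for truth" / "evidence for falsity" coordinates *)
Definition tv (x : FOUR) : bool := match x with TT | II => true | _ => false end.
Definition fv (x : FOUR) : bool := match x with FF | II => true | _ => false end.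
Definition mk (t f : bool) : FOUR :=
  match t, f with
  | true, false => TT | false, true => FF | false, false => UU | true, true => II
  end.

Definition andF   (x y : FOUR) : FOUR := mk (tv x && tv y) (fv x || fv y).
Definition orF    (x y : FOUR) : FOUR := mk (tv x || tv y) (fv x && fv y).
Definition otimesF (x y : FOUR) : FOUR := mk (tv x && tv y) (fv x && fv y).
Definition oplusF (x y : FOUR) : FOUR := mk (tv x || tv y) (fv x || fv y).

Definition bool_of (P : Prop) : bool :=
  if excluded_middle_informative P then true else false.

Definition bigor {I : Type} (g : I -> FOUR) : FOUR :=
  mk (bool_of (exists i, tv (g i) = true)) (bool_of (forall i, fv (g i) = true)).
Definition bigand {I : Type} (g : I -> FOUR) : FOUR :=
  mk (bool_of (forall i, tv (g i) = true)) (bool_of (exists i, fv (g i) = true)).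

Lemma orF_lub : forall x y z,
  le_t x (orF x y) = true /\ le_t y (orF x y) = true /\
  (le_t x z = true -> le_t y z = true -> le_t (orF x y) z = true).
Proof. destruct x, y, z; simpl; intuition discriminate. Qed.
Lemma andF_glb : forall x y z,
  le_t (andF x y) x = true /\ le_t (andF x y) y = true /\
  (le_t z x = true -> le_t z y = true -> le_t z (andF x y) = true).
Proof. destruct x, y, z; simpl; intuition discriminate. Qed.
Lemma oplusF_lub : forall x y z,
  le_k x (oplusF x y) = true /\ le_k y (oplusF x y) = true /\
  (le_k x z = true -> le_k y z = true -> le_k (oplusF x y) z = true).
Proof. destruct x, y, z; simpl; intuition discriminate. Qed.
Lemma otimesF_glb : forall x y z,
  le_k (otimesF x y) x = true /\ le_k (otimesF x y) y = true /\
  (le_k z x = true -> le_k z y = true -> le_k z (otimesF x y) = true).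
Proof. destruct x, y, z; simpl; intuition discriminate. Qed.

Record Sig : Type := {
  fsym : Type; farity : fsym -> nat;   (* function symbols (constants: arity 0) *)
  psym : Type; parity : psym -> nat
}.

Section Syntax.
Variable S : Sig.

Inductive term : Type :=
| Var (n : nat)
| Fn (f : fsym S) (ts : list term).

Fixpoint gok (t : term) : bool :=
  match t with
  | Var _ => false
  | Fn f ts => Nat.eqb (length ts) (farity S f) && forallb gok ts
  end.
Definition HU : Type := { t : term | gok t = true }.

Definition atom_ok (p : psym S) (ts : list term) : bool :=
  Nat.eqb (length ts) (parity S p) && forallb gok ts.
Definition GAtom : Type := { a : psym S * list term | atom_ok (fst a) (snd a) = true }.

Inductive formula : Type :=
| FConst (b : FOUR)
| FPos (p : psym S) (ts : list term)
| FNeg (p : psym S) (ts : list term)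
| FEqual (s t : term)
| FAnd (a b : formula) | FOr (a b : formula)
| FOtimes (a b : formula) | FOplus (a b : formula)
| FEx (x : nat) (a : formula) | FAll (x : nat) (a : formula).

Fixpoint wf_term (t : term) : bool :=
  match t with
  | Var _ => true
  | Fn f ts => Nat.eqb (length ts) (farity S f) && forallb wf_term ts
  end.

Fixpoint wf_formula (a : formula) : bool :=
  match a with
  | FConst _ => true
  | FPos p ts | FNeg p ts => Nat.eqb (length ts) (parity S p) && forallb wf_term ts
  | FEqual s t => wf_term s && wf_term t
  | FAnd a b | FOr a b | FOtimes a b | FOplus a b => wf_formula a && wf_formula b
  | FEx _ a | FAll _ a => wf_formula a
  end.

Fixpoint tvars (t : term) : list nat :=
  match t with Var n => [n] | Fn _ ts => flat_map tvars ts end.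

Fixpoint fvars (a : formula) : list nat :=
  match a with
  | FConst _ => []
  | FPos _ ts | FNeg _ ts => flat_map tvars ts
  | FEqual s t => tvars s ++ tvars t
  | FAnd a b | FOr a b | FOtimes a b | FOplus a b => fvars a ++ fvars b
  | FEx x a | FAll x a => filter (fun n => negb (Nat.eqb n x)) (fvars a)
  end.

Fixpoint conventional_formula (a : formula) : bool :=
  match a with
  | FConst UU | FConst II => false
  | FConst _ | FPos _ _ | FNeg _ _ | FEqual _ _ => true
  | FAnd a b | FOr a b => conventional_formula a && conventional_formula b
  | FOtimes _ _ | FOplus _ _ | FAll _ _ => false
  | FEx _ a => conventional_formula a
  end.

Record clause : Type := { chead : psym S; cvars : list nat; cbody : formula }.
Definition program : Type := list clause.

Definition is_program (P : program) : Prop :=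
  (forall c, In c P ->
     NoDup (cvars c) /\ length (cvars c) = parity S (chead c) /\
     wf_formula (cbody c) = true /\
     (forall n, In n (fvars (cbody c)) -> In n (cvars c)))
  /\ NoDup (map chead P).

Definition conventional_program (P : program) : Prop :=
  is_program P /\ forall c, In c P -> conventional_formula (cbody c) = true.

(** closed formulas; an existential/universal closed formula is represented by
    the family of its closed-term instances *)
Inductive gform : Type :=
| GConst (b : FOUR)
| GPos (A : GAtom) | GNeg (A : GAtom)
| GEqual (s t : HU)
| GAnd (a b : gform) | GOr (a b : gform)
| GOtimes (a b : gform) | GOplus (a b : gform)
| GEx (g : HU -> gform) | GAll (g : HU -> gform).

Fixpoint tsub (rho : nat -> term) (t : term) : term :=
  match t with Var n => rho n | Fn f ts => Fn f (map (tsub rho) ts) end.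

Definition upd (rho : nat -> term) (x : nat) (t : term) : nat -> term :=
  fun n => if Nat.eqb n x then t else rho n.

Fixpoint env_of (xs : list nat) (ts : list term) : nat -> term :=
  match xs, ts with
  | x :: xs', t :: ts' => upd (env_of xs' ts') x t
  | _, _ => Var
  end.

Definition mkatom (p : psym S) (ts : list term) : option GAtom :=
  match atom_ok p ts as b return atom_ok p ts = b -> option GAtom with
  | true => fun H => Some (exist _ (p, ts) H)
  | false => fun _ => None
  end eq_refl.

Definition mkhu (t : term) : option HU :=
  match gok t as b return gok t = b -> option HU with
  | true => fun H => Some (exist _ t H)
  | false => fun _ => None
  end eq_refl.

(** instance of a formula under a substitution of closed terms; the [None]
    branches never occur for well-formed clause bodies instantiated by closed
    terms for all their free variables *)
Fixpoint ground (rho : nat -> term) (a : formula) : gform :=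
  match a with
  | FConst b => GConst b
  | FPos p ts => match mkatom p (map (tsub rho) ts) with
                 | Some A => GPos A | None => GConst FF end
  | FNeg p ts => match mkatom p (map (tsub rho) ts) with
                 | Some A => GNeg A | None => GConst FF end
  | FEqual s t => match mkhu (tsub rho s), mkhu (tsub rho t) with
                  | Some s', Some t' => GEqual s' t'
                  | _, _ => GConst FF end
  | FAnd a b => GAnd (ground rho a) (ground rho b)
  | FOr a b => GOr (ground rho a) (ground rho b)
  | FOtimes a b => GOtimes (ground rho a) (ground rho b)
  | FOplus a b => GOplus (ground rho a) (ground rho b)
  | FEx x a => GEx (fun c => ground (upd rho x (proj1_sig c)) a)
  | FAll x a => GAll (fun c => ground (upd rho x (proj1_sig c)) a)
  end.

(** [inst P A B] : the ground clause  A <- B  belongs to Inst-P *)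
Definition inst (P : program) (A : GAtom) (B : gform) : Prop :=
  exists c, In c P /\ chead c = fst (proj1_sig A) /\
            B = ground (env_of (cvars c) (snd (proj1_sig A))) (cbody c).

Definition Val : Type := GAtom -> FOUR.
Definition le_t_val (v w : Val) : Prop := forall A, le_t (v A) (w A) = true.
Definition le_k_val (v w : Val) : Prop := forall A, le_k (v A) (w A) = true.

(** contrajoin evaluation  (v /\ w)(B) ; the ordinary valuation is [geval v v] *)
Fixpoint geval (v w : Val) (g : gform) : FOUR :=
  match g with
  | GConst b => b
  | GPos A => v A
  | GNeg A => negF (w A)
  | GEqual s t => if bool_of (s = t) then TT else FF
  | GAnd a b => andF (geval v w a) (geval v w b)
  | GOr a b => orF (geval v w a) (geval v w b)
  | GOtimes a b => otimesF (geval v w a) (geval v w b)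
  | GOplus a b => oplusF (geval v w a) (geval v w b)
  | GEx g => bigor (fun c => geval v w (g c))
  | GAll g => bigand (fun c => geval v w (g c))
  end.

Definition is_least_fix {X : Type} (le : X -> X -> Prop) (f : X -> X) (x : X) : Prop :=
  f x = x /\ forall y, f y = y -> le x y.

Definition is_least_fix_in {X : Type} (D : X -> Prop) (le : X -> X -> Prop)
  (f : X -> X) (x : X) : Prop :=
  D x /\ f x = x /\ forall y, D y -> f y = y -> le x y.

Definition Psi (alpha : FOUR) (P : program) (v w : Val) : Val :=
  fun A =>
    match excluded_middle_informative (exists B, inst P A B) with
    | left H => geval v w (proj1_sig (constructive_indefinite_description _ H))
    | right _ => alpha
    end.

Definition val_inh : inhabited Val := inhabits (fun _ => FF).

Definition PsiF' (P : program) (v : Val) : Val :=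
  epsilon val_inh (is_least_fix le_t_val (fun x => Psi FF P x v)).

Definition PsiU' (P : program) (v : Val) : Val :=
  epsilon val_inh (is_least_fix le_k_val (fun x => Psi UU P x v)).

Definition pessimistic_fixed_model (P : program) (v : Val) : Prop := PsiF' P v = v.

Definition Fix_F_U (P : program) : Val := epsilon val_inh (is_least_fix le_k_val (PsiF' P)).
Definition Fix_U_U (P : program) : Val := epsilon val_inh (is_least_fix le_k_val (PsiU' P)).

(** * Three-valued stable models (Przymusinski) *)

Definition three_valued (v : Val) : Prop := forall A, v A <> II.

Fixpoint reduct (v : Val) (g : gform) : gform :=
  match g with
  | GConst b => GConst b
  | GPos A => GPos A
  | GNeg A => GConst (negF (v A))
  | GEqual s t => GEqual s t
  | GAnd a b => GAnd (reduct v a) (reduct v b)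
  | GOr a b => GOr (reduct v a) (reduct v b)
  | GOtimes a b => GOtimes (reduct v a) (reduct v b)
  | GOplus a b => GOplus (reduct v a) (reduct v b)
  | GEx g => GEx (fun c => reduct v (g c))
  | GAll g => GAll (fun c => reduct v (g c))
  end.

Definition Phi_red (P : program) (v : Val) (u : Val) : Val :=
  fun A =>
    if bool_of (exists B, inst P A B)
    then bigor (fun B : { B : gform | inst P A B } => geval u u (reduct v (proj1_sig B)))
    else FF.

Definition three_valued_stable (P : program) (v : Val) : Prop :=
  is_least_fix_in three_valued le_t_val (Phi_red P v) v.

Definition well_founded (P : program) (v : Val) : Prop :=
  three_valued_stable P v /\ forall w, three_valued_stable P w -> le_k_val v w.

Definition Phi_KK (P : program) (v : Val) : Val :=
  fun A =>
    if bool_of (exists B, inst P A B /\ geval v v B = TT) then TT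
    else if bool_of ((exists B, inst P A B) /\
                     forall B, inst P A B -> geval v v B = FF) then FF
    else UU.

Definition kripke_kleene (P : program) (v : Val) : Prop :=
  is_least_fix le_k_val (Phi_KK P) v.

End Syntax.

(* Main.v *)
Require Import Defs.
From Stdlib Require Import List Arith Bool ClassicalEpsilon Classical FunctionalExtensionality.
Import ListNotations.
Set Implicit Arguments.

Lemma bool_of_iff (P : Prop) : bool_of P = true <-> P.
Proof. unfold bool_of; destruct excluded_middle_informative; split; intuition discriminate. Qed.
Lemma bool_of_true (P : Prop) : P -> bool_of P = true.
Proof. apply bool_of_iff. Qed.
Lemma bool_of_false (P : Prop) : ~ P -> bool_of P = false.
Proof. unfold bool_of; destruct excluded_middle_informative; tauto. Qed.

Lemma tv_mk t f : tv (mk t f) = t. Proof. destruct t, f; reflexivity. Qed.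
Lemma fv_mk t f : fv (mk t f) = f. Proof. destruct t, f; reflexivity. Qed.
Lemma FOUR_ext x y : tv x = tv y -> fv x = fv y -> x = y.
Proof. destruct x, y; simpl; congruence. Qed.
Lemma tv_negF x : tv (negF x) = fv x. Proof. destruct x; reflexivity. Qed.
Lemma fv_negF x : fv (negF x) = tv x. Proof. destruct x; reflexivity. Qed.

Lemma le_t_iff x y : le_t x y = true <-> ((tv x = true -> tv y = true) /\ (fv y = true -> fv x = true)).
Proof. destruct x, y; simpl; intuition discriminate. Qed.
Lemma le_k_iff x y : le_k x y = true <-> ((tv x = true -> tv y = true) /\ (fv x = true -> fv y = true)).
Proof. destruct x, y; simpl; intuition discriminate. Qed.

Definition cons4 (a : FOUR) : Prop := tv a = true -> fv a = true -> False.

Lemma three_valued_iff S (v : Val S) : three_valued v <-> forall A, cons4 (v A).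
Proof. unfold three_valued, cons4; split; intros H A; specialize (H A); destruct (v A); simpl in *; intuition discriminate. Qed.

Lemma KT (X:Type) (le: X->X->Prop) (inf: (X->Prop)->X)
 (antisym: forall x y, le x y -> le y x -> x = y)
 (trans: forall x y z, le x y -> le y z -> le x z)
 (inf_lb: forall (P:X->Prop) y, P y -> le (inf P) y)
 (inf_glb: forall (P:X->Prop) z, (forall y, P y -> le z y) -> le z (inf P))
 (f: X->X) (mono: forall x y, le x y -> le (f x) (f y)) :
 exists K, f K = K /\ forall y, le (f y) y -> le K y.
Proof.
  set (K := inf (fun y => le (f y) y)).
  assert (H1: le (f K) K).
  { apply inf_glb; intros y Hy. eapply trans; [apply mono, inf_lb, Hy | exact Hy]. }
  exists K; split.
  - apply antisym; auto. apply inf_lb. apply mono; auto.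
  - intros; apply inf_lb; auto.
Qed.

Lemma eps_lfp (X:Type) (inh: inhabited X) (le: X->X->Prop)
 (antisym: forall x y, le x y -> le y x -> x = y) f K :
 is_least_fix le f K -> epsilon inh (is_least_fix le f) = K.
Proof.
  intro H. assert (H2 := epsilon_spec inh (is_least_fix le f) (ex_intro _ K H)).
  destruct H as [H1 H1'], H2 as [H2 H2']. apply antisym; auto.
Qed.

Section V.
Variable S : Sig.

Definition inf_t (P : Val S -> Prop) : Val S := fun A =>
  mk (bool_of (forall y, P y -> tv (y A) = true)) (bool_of (exists y, P y /\ fv (y A) = true)).
Definition inf_k (P : Val S -> Prop) : Val S := fun A =>
  mk (bool_of (forall y, P y -> tv (y A) = true)) (bool_of (forall y, P y -> fv (y A) = true)).

Lemma le_t_antisym (x y : Val S) : le_t_val x y -> le_t_val y x -> x = y.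
Proof.
  intros H1 H2; apply functional_extensionality; intro A.
  specialize (H1 A); specialize (H2 A); rewrite le_t_iff in *.
  apply FOUR_ext; apply eq_true_iff_eq; tauto.
Qed.
Lemma le_k_antisym (x y : Val S) : le_k_val x y -> le_k_val y x -> x = y.
Proof.
  intros H1 H2; apply functional_extensionality; intro A.
  specialize (H1 A); specialize (H2 A); rewrite le_k_iff in *.
  apply FOUR_ext; apply eq_true_iff_eq; tauto.
Qed.
Lemma le_t_trans (x y z : Val S) : le_t_val x y -> le_t_val y z -> le_t_val x z.
Proof. intros H1 H2 A; specialize (H1 A); specialize (H2 A); rewrite le_t_iff in *; tauto. Qed.
Lemma le_k_trans (x y z : Val S) : le_k_val x y -> le_k_val y z -> le_k_val x z.
Proof. intros H1 H2 A; specialize (H1 A); specialize (H2 A); rewrite le_k_iff in *; tauto. Qed.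
Lemma le_t_refl (x : Val S) : le_t_val x x.
Proof. intros A; rewrite le_t_iff; tauto. Qed.
Lemma le_k_refl (x : Val S) : le_k_val x x.
Proof. intros A; rewrite le_k_iff; tauto. Qed.

Lemma inf_t_lb P y : P y -> le_t_val (inf_t P) y.
Proof.
  intros Hy A; unfold inf_t; rewrite le_t_iff, tv_mk, fv_mk, !bool_of_iff.
  split; eauto.
Qed.
Lemma inf_t_glb P z : (forall y, P y -> le_t_val z y) -> le_t_val z (inf_t P).
Proof.
  intros H A; unfold inf_t; rewrite le_t_iff, tv_mk, fv_mk, !bool_of_iff.
  split.
  - intros Hz y Hy. specialize (H y Hy A); rewrite le_t_iff in H; tauto.
  - intros [y [Hy Hf]]. specialize (H y Hy A); rewrite le_t_iff in H; tauto.
Qed.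
Lemma inf_k_lb P y : P y -> le_k_val (inf_k P) y.
Proof.
  intros Hy A; unfold inf_k; rewrite le_k_iff, tv_mk, fv_mk, !bool_of_iff.
  split; eauto.
Qed.
Lemma inf_k_glb P z : (forall y, P y -> le_k_val z y) -> le_k_val z (inf_k P).
Proof.
  intros H A; unfold inf_k; rewrite le_k_iff, tv_mk, fv_mk, !bool_of_iff.
  split; intros Hz y Hy; specialize (H y Hy A); rewrite le_k_iff in H; tauto.
Qed.

Lemma KT_t (f : Val S -> Val S) : (forall x y, le_t_val x y -> le_t_val (f x) (f y)) ->
  exists K, f K = K /\ forall y, le_t_val (f y) y -> le_t_val K y.
Proof. intro; eapply KT; eauto using le_t_antisym, le_t_trans, inf_t_lb, inf_t_glb. Qed.
Lemma KT_k (f : Val S -> Val S) : (forall x y, le_k_val x y -> le_k_val (f x) (f y)) ->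
  exists K, f K = K /\ forall y, le_k_val (f y) y -> le_k_val K y.
Proof. intro; eapply KT; eauto using le_k_antisym, le_k_trans, inf_k_lb, inf_k_glb. Qed.

End V.
Section G.
Variable S : Sig.

Lemma tv_andF a b : tv (andF a b) = tv a && tv b. Proof. apply tv_mk. Qed.
Lemma fv_andF a b : fv (andF a b) = fv a || fv b. Proof. apply fv_mk. Qed.
Lemma tv_orF a b : tv (orF a b) = tv a || tv b. Proof. apply tv_mk. Qed.
Lemma fv_orF a b : fv (orF a b) = fv a && fv b. Proof. apply fv_mk. Qed.
Lemma tv_otF a b : tv (otimesF a b) = tv a && tv b. Proof. apply tv_mk. Qed.
Lemma fv_otF a b : fv (otimesF a b) = fv a && fv b. Proof. apply fv_mk. Qed.
Lemma tv_opF a b : tv (oplusF a b) = tv a || tv b. Proof. apply tv_mk. Qed.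
Lemma fv_opF a b : fv (oplusF a b) = fv a || fv b. Proof. apply fv_mk. Qed.
Lemma tv_bigor I (g : I -> FOUR) : tv (bigor g) = bool_of (exists i, tv (g i) = true). Proof. apply tv_mk. Qed.
Lemma fv_bigor I (g : I -> FOUR) : fv (bigor g) = bool_of (forall i, fv (g i) = true). Proof. apply fv_mk. Qed.
Lemma tv_bigand I (g : I -> FOUR) : tv (bigand g) = bool_of (forall i, tv (g i) = true). Proof. apply tv_mk. Qed.
Lemma fv_bigand I (g : I -> FOUR) : fv (bigand g) = bool_of (exists i, fv (g i) = true). Proof. apply fv_mk. Qed.

Lemma geval_tv (x x' w w' : Val S) (g : gform S) :
  (forall A, tv (x A) = true -> tv (x' A) = true) ->
  (forall A, fv (w A) = true -> fv (w' A) = true) ->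
  tv (geval x w g) = true -> tv (geval x' w' g) = true.
Proof.
  intros Hx Hw; induction g; simpl; auto;
  rewrite ?tv_negF, ?tv_andF, ?tv_orF, ?tv_otF, ?tv_opF, ?tv_bigor, ?tv_bigand,
    ?andb_true_iff, ?orb_true_iff, ?bool_of_iff; try tauto.
  - apply Hw.
  - intros [i Hi]; eauto.
  - intros Hi i; eauto.
Qed.

Lemma geval_fv (x x' w w' : Val S) (g : gform S) :
  (forall A, fv (x A) = true -> fv (x' A) = true) ->
  (forall A, tv (w A) = true -> tv (w' A) = true) ->
  fv (geval x w g) = true -> fv (geval x' w' g) = true.
Proof.
  intros Hx Hw; induction g; simpl; auto;
  rewrite ?fv_negF, ?fv_andF, ?fv_orF, ?fv_otF, ?fv_opF, ?fv_bigor, ?fv_bigand,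
    ?andb_true_iff, ?orb_true_iff, ?bool_of_iff; try tauto.
  - apply Hw.
  - intros Hi i; eauto.
  - intros [i Hi]; eauto.
Qed.

Fixpoint cons_g (g : gform S) : Prop :=
  match g with
  | GConst _ b => b <> II
  | GOplus _ _ => False
  | GAnd a b | GOr a b | GOtimes a b => cons_g a /\ cons_g b
  | GEx g | GAll g => forall c, cons_g (g c)
  | _ => True
  end.

Lemma geval_cons (x w : Val S) (g : gform S) :
  cons_g g -> (forall A, cons4 (x A)) -> (forall A, cons4 (w A)) -> cons4 (geval x w g).
Proof.
  intros Hg Hx Hw; induction g; simpl in *; unfold cons4 in *;
  rewrite ?tv_negF, ?fv_negF, ?tv_andF, ?tv_orF, ?tv_otF, ?tv_bigor, ?tv_bigand,
    ?fv_andF, ?fv_orF, ?fv_otF, ?fv_bigor, ?fv_bigand,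
    ?andb_true_iff, ?orb_true_iff, ?bool_of_iff; eauto.
  all: try (intros; intuition eauto; fail).
  - destruct b; simpl; solve [auto | congruence].
  - destruct (bool_of (s = t)); simpl; discriminate.
  - intros [i Hi] Hf; eapply H; eauto.
  - intros Ht [i Hi]; eapply H; eauto.
Qed.

Lemma ground_cons rho (a : formula S) : conventional_formula a = true -> cons_g (ground rho a).
Proof.
  revert rho; induction a; intros rho Hc; simpl in *.
  - destruct b; simpl in *; solve [auto | congruence].
  - destruct (mkatom p (map (tsub rho) ts)); simpl; solve [auto | congruence].
  - destruct (mkatom p (map (tsub rho) ts)); simpl; solve [auto | congruence].
  - destruct (mkhu (tsub rho s)), (mkhu (tsub rho t)); simpl; solve [auto | congruence].
  - apply andb_true_iff in Hc; intuition.
  - apply andb_true_iff in Hc; intuition.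
  - discriminate.
  - discriminate.
  - intros c; apply IHa; auto.
  - discriminate.
Qed.

Lemma NoDup_map_inj {A B : Type} (f : A -> B) l a b :
  NoDup (map f l) -> In a l -> In b l -> f a = f b -> a = b.
Proof.
  induction l as [|c l IH]; simpl; intros Hn Ha Hb Hf; [contradiction|].
  inversion Hn; subst.
  destruct Ha as [->|Ha], Hb as [->|Hb]; auto.
  - exfalso; apply H1; rewrite Hf; apply in_map; auto.
  - exfalso; apply H1; rewrite <- Hf; apply in_map; auto.
Qed.

Lemma inst_unique (P : program S) A B B' : is_program P -> inst P A B -> inst P A B' -> B = B'.
Proof.
  intros [_ Hnd] (c & Hc & Hh & ->) (c' & Hc' & Hh' & ->).
  assert (c = c') as -> by (eapply NoDup_map_inj; eauto; congruence). reflexivity.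
Qed.

Lemma inst_cons (P : program S) A B : conventional_program P -> inst P A B -> cons_g B.
Proof.
  intros [_ Hc] (c & Hin & _ & ->). apply ground_cons; auto.
Qed.

Lemma Psi_spec alpha (P : program S) A :
  (exists B, inst P A B /\ forall x w, Psi alpha P x w A = geval x w B) \/
  ((~ exists B, inst P A B) /\ forall x w, Psi alpha P x w A = alpha).
Proof.
  unfold Psi. destruct (excluded_middle_informative (exists B, inst P A B)) as [H|H].
  - left. exists (proj1_sig (constructive_indefinite_description _ H)). split; auto.
    apply proj2_sig.
  - right; auto.
Qed.

Lemma Psi_inst alpha (P : program S) A B x w : is_program P -> inst P A B -> Psi alpha P x w A = geval x w B.
Proof.
  intros Hp HB. destruct (Psi_spec alpha P A) as [[B' [HB' E]]|[HN _]].
  - rewrite E. rewrite (inst_unique Hp HB' HB); auto.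
  - exfalso; eauto.
Qed.

Lemma Psi_t_mono alpha (P : program S) (x x' w : Val S) :
  le_t_val x x' -> le_t_val (Psi alpha P x w) (Psi alpha P x' w).
Proof.
  intros H A. destruct (Psi_spec alpha P A) as [[B [_ E]]|[_ E]]; rewrite !E.
  - rewrite le_t_iff; split.
    + apply geval_tv; auto. intros A'; specialize (H A'); rewrite le_t_iff in H; tauto.
    + apply geval_fv; auto. intros A'; specialize (H A'); rewrite le_t_iff in H; tauto.
  - rewrite le_t_iff; tauto.
Qed.

Lemma Psi_k_mono alpha (P : program S) (x x' w w' : Val S) :
  le_k_val x x' -> le_k_val w w' -> le_k_val (Psi alpha P x w) (Psi alpha P x' w').
Proof.
  intros H H' A. destruct (Psi_spec alpha P A) as [[B [_ E]]|[_ E]]; rewrite !E.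
  - rewrite le_k_iff; split.
    + apply geval_tv; intros A'; [specialize (H A') | specialize (H' A')]; rewrite le_k_iff in *; tauto.
    + apply geval_fv; intros A'; [specialize (H A') | specialize (H' A')]; rewrite le_k_iff in *; tauto.
  - rewrite le_k_iff; tauto.
Qed.

Lemma reduct_geval (u v : Val S) g : geval u u (reduct v g) = geval u v g.
Proof.
  induction g; simpl; try congruence; f_equal; apply functional_extensionality; auto.
Qed.

Lemma bigor_const I (g : I -> FOUR) x (i0 : I) : (forall i, g i = x) -> bigor g = x.
Proof.
  intros Hg. apply FOUR_ext; rewrite ?tv_bigor, ?fv_bigor; apply eq_true_iff_eq; rewrite bool_of_iff.
  - split; [intros [i Hi]; rewrite Hg in Hi; auto | intros; exists i0; rewrite Hg; auto].
  - split; [intros Hi; rewrite <- (Hg i0); auto | intros; rewrite Hg; auto].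
Qed.

Lemma Phi_red_Psi (P : program S) (v u : Val S) : is_program P -> Phi_red P v u = Psi FF P u v.
Proof.
  intros Hp; apply functional_extensionality; intro A. unfold Phi_red.
  destruct (classic (exists B, inst P A B)) as [[B HB]|HN].
  - rewrite bool_of_true by eauto. rewrite (Psi_inst FF u v Hp HB).
    apply bigor_const; [exact (exist _ B HB)|].
    intros [B' HB']; simpl. rewrite reduct_geval. rewrite (inst_unique Hp HB' HB); auto.
  - rewrite bool_of_false by auto.
    destruct (Psi_spec FF P A) as [[B [HB _]]|[_ E]]; [exfalso; eauto | rewrite E; auto].
Qed.

End G.
Section M.
Variable S : Sig.
Implicit Types (P : program S) (v x y w : Val S).

Lemma PsiF'_spec P v : Psi FF P (PsiF' P v) v = PsiF' P v /\
  forall y, le_t_val (Psi FF P y v) y -> le_t_val (PsiF' P v) y.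
Proof.
  destruct (KT_t (fun x => Psi FF P x v)) as [K [HK Hl]].
  { intros; apply Psi_t_mono; auto. }
  unfold PsiF'. rewrite (eps_lfp (val_inh S) (@le_t_antisym S) (f := fun x => Psi FF P x v) (K := K)).
  - auto.
  - split; auto. intros y Hy; apply Hl; rewrite Hy; apply le_t_refl.
Qed.

Lemma PsiU'_spec P v : Psi UU P (PsiU' P v) v = PsiU' P v /\
  forall y, le_k_val (Psi UU P y v) y -> le_k_val (PsiU' P v) y.
Proof.
  destruct (KT_k (fun x => Psi UU P x v)) as [K [HK Hl]].
  { intros; apply Psi_k_mono; auto using le_k_refl. }
  unfold PsiU'. rewrite (eps_lfp (val_inh S) (@le_k_antisym S) (f := fun x => Psi UU P x v) (K := K)).
  - auto.
  - split; auto. intros y Hy; apply Hl; rewrite Hy; apply le_k_refl.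
Qed.

Lemma L_cons P v : conventional_program P -> (forall A, cons4 (v A)) ->
  forall A, cons4 (PsiF' P v A).
Proof.
  intros Hc Hv. destruct (PsiF'_spec P v) as [Hfix Hl].
  set (L := PsiF' P v) in *.
  set (y := fun A => mk (negb (fv (L A))) (fv (L A))).
  assert (Hy : le_t_val (Psi FF P y v) y).
  { intros A. destruct (Psi_spec FF P A) as [[B [HB E]]|[_ E]]; rewrite E.
    - assert (HLA : L A = geval L v B) by (rewrite <- E, Hfix; reflexivity).
      assert (Hfy : forall A', fv (L A') = true -> fv (y A') = true) by (intros; unfold y; rewrite fv_mk; auto).
      rewrite le_t_iff; split.
      + intros Ht. unfold y; rewrite tv_mk.
        destruct (fv (L A)) eqn:EF; auto. exfalso.
        rewrite HLA in EF. apply geval_fv with (x' := y) (w' := v) in EF; auto.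
        assert (Hyc : forall A', cons4 (y A')).
        { intros A'; unfold cons4, y; rewrite tv_mk, fv_mk; destruct (fv (L A')); discriminate. }
        exact (@geval_cons S y v B (inst_cons Hc HB) Hyc Hv Ht EF).
      + unfold y at 1; rewrite fv_mk, HLA. apply geval_fv; auto.
    - reflexivity. }
  intros A. specialize (Hl y Hy A). rewrite le_t_iff in Hl. unfold y in Hl.
  rewrite tv_mk, fv_mk in Hl. unfold cons4; intros Ht Hf. destruct Hl as [Hl _].
  specialize (Hl Ht). rewrite Hf in Hl; discriminate.
Qed.

Lemma part1 P v : conventional_program P -> three_valued_stable P v -> PsiF' P v = v.
Proof.
  intros Hc [H3 [Hfix Hmin]].
  pose proof (proj1 Hc) as Hp.
  rewrite Phi_red_Psi in Hfix by auto.
  destruct (PsiF'_spec P v) as [LF Ll].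
  apply le_t_antisym.
  - apply Ll. rewrite Hfix; apply le_t_refl.
  - apply Hmin.
    + apply three_valued_iff, L_cons; auto. apply three_valued_iff; auto.
    + rewrite Phi_red_Psi by auto. auto.
Qed.

Lemma part1_conv P K : is_program P -> three_valued K -> PsiF' P K = K -> three_valued_stable P K.
Proof.
  intros Hp H3 Hf. destruct (PsiF'_spec P K) as [LF Ll].
  split; auto. split.
  - rewrite Phi_red_Psi by auto. rewrite <- Hf at 1. rewrite LF; auto.
  - intros y Hy3 Hy. rewrite Phi_red_Psi in Hy by auto.
    rewrite <- Hf. apply Ll. rewrite Hy; apply le_t_refl.
Qed.

Lemma PsiF'_kmono P v v' : le_k_val v v' -> le_k_val (PsiF' P v) (PsiF' P v').
Proof.
  intros Hvv.
  destruct (PsiF'_spec P v) as [Hfix Hl]. destruct (PsiF'_spec P v') as [Hfix' Hl'].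
  set (L := PsiF' P v) in *. set (L' := PsiF' P v') in *.
  assert (Hk : forall A, (tv (v A) = true -> tv (v' A) = true) /\ (fv (v A) = true -> fv (v' A) = true))
    by (intros A; apply le_k_iff; auto).
  set (y := fun A => mk (tv (L' A)) (fv (L A))).
  assert (Hy : le_t_val (Psi FF P y v) y).
  { intros A. destruct (Psi_spec FF P A) as [[B [HB E]]|[_ E]]; rewrite E.
    - assert (HLA : L A = geval L v B) by (rewrite <- E, Hfix; reflexivity).
      assert (HLA' : L' A = geval L' v' B) by (rewrite <- E, Hfix'; reflexivity).
      rewrite le_t_iff; split.
      + intros Ht. unfold y; rewrite tv_mk, HLA'. revert Ht; apply geval_tv.
        * intros A'; unfold y; rewrite tv_mk; auto.
        * intros A'; apply Hk.
      + unfold y at 1; rewrite fv_mk, HLA. apply geval_fv; auto.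
        intros A'; unfold y; rewrite fv_mk; auto.
    - reflexivity. }
  set (y' := fun A => mk (tv (L' A)) (fv (L' A) || fv (L A))).
  assert (Hy' : le_t_val (Psi FF P y' v') y').
  { intros A. destruct (Psi_spec FF P A) as [[B [HB E]]|[_ E]]; rewrite E.
    - assert (HLA : L A = geval L v B) by (rewrite <- E, Hfix; reflexivity).
      assert (HLA' : L' A = geval L' v' B) by (rewrite <- E, Hfix'; reflexivity).
      rewrite le_t_iff; split.
      + intros Ht. unfold y'; rewrite tv_mk, HLA'. revert Ht; apply geval_tv; auto.
        intros A'; unfold y'; rewrite tv_mk; auto.
      + unfold y' at 1; rewrite fv_mk, orb_true_iff. intros [H|H].
        * rewrite HLA' in H. revert H; apply geval_fv; auto.
          intros A'; unfold y'; rewrite fv_mk, orb_true_iff; auto.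
        * rewrite HLA in H. revert H; apply geval_fv.
          -- intros A'; unfold y'; rewrite fv_mk, orb_true_iff; auto.
          -- intros A'; apply Hk.
    - reflexivity. }
  intros A. specialize (Hl y Hy A). specialize (Hl' y' Hy' A).
  rewrite le_t_iff in Hl, Hl'. unfold y, y' in *. rewrite ?tv_mk, ?fv_mk, ?orb_true_iff in *.
  apply le_k_iff; split; tauto.
Qed.

Lemma part2 P v : conventional_program P -> well_founded P v -> v = Fix_F_U P.
Proof.
  intros Hc [Hs Hmin]. pose proof (proj1 Hc) as Hp.
  assert (Hv : PsiF' P v = v) by (apply part1; auto).
  symmetry. unfold Fix_F_U. apply eps_lfp; [apply le_k_antisym|].
  split; auto. intros y Hy.
  destruct (KT_k (PsiF' P)) as [K [HK Hl]]. { intros; apply PsiF'_kmono; auto. }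
  assert (HKv : le_k_val K v) by (apply Hl; rewrite Hv; apply le_k_refl).
  assert (HK3 : three_valued K).
  { apply three_valued_iff. destruct Hs as [H3 _]. rewrite three_valued_iff in H3.
    intros A Ht Hf. specialize (HKv A); rewrite le_k_iff in HKv. apply (H3 A); tauto. }
  apply le_k_trans with K.
  - apply Hmin, part1_conv; auto.
  - apply Hl; rewrite Hy; apply le_k_refl.
Qed.

Lemma Phi_KK_D P x : conventional_program P -> (forall A, cons4 (x A)) -> Phi_KK P x = Psi UU P x x.
Proof.
  intros Hc Hx. pose proof (proj1 Hc) as Hp. apply functional_extensionality; intro A. unfold Phi_KK.
  destruct (classic (exists B, inst P A B)) as [[B HB]|HN].
  - rewrite (Psi_inst UU x x Hp HB).
    assert (Hcons := @geval_cons S x x B (inst_cons Hc HB) Hx Hx).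
    assert (Huniq : forall B', inst P A B' -> B' = B) by (intros; eapply inst_unique; eauto).
    destruct (geval x x B) eqn:E.
    + rewrite bool_of_false. rewrite bool_of_true; auto.
      * split; eauto. intros B' HB'; rewrite (Huniq _ HB'); auto.
      * intros [B' [HB' E']]; rewrite (Huniq _ HB') in E'; congruence.
    + rewrite bool_of_true; eauto.
    + rewrite !bool_of_false; auto.
      * intros [_ H']. specialize (H' B HB); congruence.
      * intros [B' [HB' E']]; rewrite (Huniq _ HB') in E'; congruence.
    + exfalso; apply Hcons; reflexivity.
  - rewrite !bool_of_false.
    + destruct (Psi_spec UU P A) as [[B [HB _]]|[_ E]]; [exfalso; eauto | rewrite E; auto].
    + intros [H _]; auto.
    + intros [B [HB _]]; eauto.
Qed.

Lemma Phi_KK_cons P x A : cons4 (Phi_KK P x A).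
Proof.
  unfold Phi_KK, cons4. destruct (bool_of _); [simpl; discriminate|].
  destruct (bool_of _); simpl; discriminate.
Qed.

Lemma part3 P v : conventional_program P -> kripke_kleene P v -> v = Fix_U_U P.
Proof.
  intros Hc [Hfix Hmin].
  set (D := fun x => Psi UU P x x).
  destruct (KT_k D) as [K [HK Hl]]. { intros; apply Psi_k_mono; auto. }
  assert (Hvc : forall A, cons4 (v A)) by (intros A; rewrite <- Hfix; apply Phi_KK_cons).
  assert (HDv : D v = v) by (unfold D; rewrite <- Phi_KK_D; auto).
  assert (HKv : le_k_val K v) by (apply Hl; rewrite HDv; apply le_k_refl).
  assert (HKc : forall A, cons4 (K A)).
  { intros A Ht Hf. specialize (HKv A); rewrite le_k_iff in HKv. apply (Hvc A); tauto. }
  assert (HvK : v = K).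
  { apply le_k_antisym; auto. apply Hmin. rewrite Phi_KK_D; auto. }
  subst K.
  assert (HU : PsiU' P v = v).
  { destruct (PsiU'_spec P v) as [HM Hml].
    assert (H1 : le_k_val (PsiU' P v) v) by (apply Hml; fold (D v); rewrite HDv; apply le_k_refl).
    apply le_k_antisym; auto. apply Hl. unfold D.
    apply le_k_trans with (Psi UU P (PsiU' P v) v).
    - apply Psi_k_mono; auto using le_k_refl.
    - rewrite HM; apply le_k_refl. }
  unfold Fix_U_U. symmetry. apply eps_lfp; [apply le_k_antisym|].
  split; auto. intros y Hy. apply Hl. unfold D.
  destruct (PsiU'_spec P y) as [HM _]. rewrite Hy in HM. rewrite HM; apply le_k_refl.
Qed.

End M.

Theorem theorem4 (S : Sig) (P : program S) (v : Val S) :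
  conventional_program P ->
  (three_valued_stable P v -> pessimistic_fixed_model P v) /\
  (well_founded P v -> v = Fix_F_U P) /\
  (kripke_kleene P v -> v = Fix_U_U P).
Proof.
  intros Hc. split; [|split].
  - intros H; apply part1; auto.
  - apply part2; auto.
  - apply part3; auto.
Qed.
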